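(* Let $\alpha>0$, $V=(V_1,\dots,V_n)\in[0,M]^n$ and $f\in\mathcal{H}_\alpha(M)$, and set $x_i=i/n$. Let $W_i=V_{i+1}+V_i$ and $\delta_i=f(x_{i+1})-f(x_i)$ for $1\le i\le n-1$, with averages $\bar W_n=\frac1{n-1}\sum_{i=1}^{n-1}W_i$, $\overline{\delta^2_n}=\frac1{n-1}\sum_{i=1}^{n-1}\delta_i^2$; let $\tilde W_i=V_{i+2}+V_i$ and $\tilde\delta_i=f(x_{i+2})-f(x_i)$ for $1\le i\le n-2$. Define $$T=\frac1n\sum_{i=1}^{n-1}(W_i+\delta_i^2-\bar W_n-\overline{\delta^2_n})^2,$$ $$\tilde T_1=\frac1n\sum_{i=1}^{n-3}\big(W_{i+1}+\delta_{i+1}^2-V_i-V_{i+3}-(f(x_{i+3})-f(x_i))^2\big)^2,$$ $$\tilde T_2=\frac1n\sum_{i=1}^{n-3}(\tilde W_{i+1}+\tilde\delta_{i+1}^2-\tilde W_i-\tilde\delta_i^2)^2 .$$ Then, with $\bar V_n=\frac1n\sum_{i=1}^nV_i$, $$\frac1n\sum_{i=1}^n(V_i-\bar V_n)^2\lesssim n^{-1}+n^{-4(\alpha\wedge1)}+T+\tilde T_1+\tilde T_2,$$ with an implicit constant not depending on $n,f,V$.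
   Context: $\mathcal{H}_\alpha(M)$: functions $g:[0,1]\to\mathbb{R}$ with $|g^{(\lfloor\alpha\rfloor)}(x)-g^{(\lfloor\alpha\rfloor)}(y)|\le M|x-y|^{\alpha-\lfloor\alpha\rfloor}$ for all $x,y$ and $\|g^{(k)}\|_\infty\le M$ for $k=0,\dots,\lfloor\alpha\rfloor$; $M$ is a fixed sufficiently large constant. $a\lesssim b$ means $a\le Cb$ with $C$ depending only on $\alpha,M$. *)

(* Defs.v *)
From Stdlib Require Import Reals Lra List.
From Coquelicot Require Import Coquelicot.
Open Scope R_scope.

(* sumR lo hi g = sum_{i = lo}^{hi} g i  (empty, i.e. 0, when hi < lo) *)
Definition sumR (lo hi : nat) (g : nat -> R) : R :=
  fold_right Rplus 0 (map g (seq lo (S hi - lo))).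

Definition I01 (x : R) : Prop := 0 <= x <= 1.

(* g' is the derivative of g on [0,1], taken within [0,1]
   (one-sided at the endpoints). *)
Definition is_deriv_on01 (g g' : R -> R) : Prop :=
  forall x, I01 x ->
    filterlim (fun y => (g y - g x) / (y - x))
      (within (fun y => I01 y /\ y <> x) (locally x)) (locally (g' x)).

Definition floorN (alpha : R) : nat := Z.to_nat (Int_part alpha).

(* Hoelder class H_alpha(M) on [0,1]: with m = floor alpha, the derivatives
   g 0 = f, g 1 = f', ..., g m = f^(m) exist on [0,1], are bounded by M,
   and f^(m) is (alpha - m)-Hoelder with constant M. *)
Definition Holder (alpha M : R) (f : R -> R) : Prop :=
  exists g : nat -> R -> R,
    (forall x, I01 x -> g O x = f x) /\
    (forall k, (k < floorN alpha)%nat -> is_deriv_on01 (g k) (g (S k))) /\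
    (forall k x, (k <= floorN alpha)%nat -> I01 x -> Rabs (g k x) <= M) /\
    (forall x y, I01 x -> I01 y ->
       Rabs (g (floorN alpha) x - g (floorN alpha) y)
         <= M * Rpower (Rabs (x - y)) (alpha - INR (floorN alpha))).

Section Quantities.
Variables (n : nat) (V : nat -> R) (f : R -> R).

Definition xg (i : nat) : R := INR i / INR n.
Definition W (i : nat) : R := V (S i) + V i.
Definition dl (i : nat) : R := f (xg (S i)) - f (xg i).
Definition Wt (i : nat) : R := V (S (S i)) + V i.
Definition dlt (i : nat) : R := f (xg (S (S i))) - f (xg i).

Definition Wbar : R := / INR (n - 1) * sumR 1 (n - 1) W.
Definition d2bar : R := / INR (n - 1) * sumR 1 (n - 1) (fun i => (dl i) ^ 2).

Definition Tstat : R :=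
  / INR n * sumR 1 (n - 1) (fun i => (W i + (dl i) ^ 2 - Wbar - d2bar) ^ 2).

Definition T1stat : R :=
  / INR n * sumR 1 (n - 3) (fun i =>
    (W (S i) + (dl (S i)) ^ 2 - V i - V (i + 3)%nat
       - (f (xg (i + 3)%nat) - f (xg i)) ^ 2) ^ 2).

Definition T2stat : R :=
  / INR n * sumR 1 (n - 3) (fun i =>
    (Wt (S i) + (dlt (S i)) ^ 2 - Wt i - (dlt i) ^ 2) ^ 2).

Definition Vbar : R := / INR n * sumR 1 n V.

Definition Vvar : R := / INR n * sumR 1 n (fun i => (V i - Vbar) ^ 2).

End Quantities.

(* Main.v *)
Require Import Defs.
From Stdlib Require Import Reals Lra Lia List.
From Coquelicot Require Import Coquelicot.
Open Scope R_scope.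

Lemma fr_acc (l : list R) a : fold_right Rplus a l = fold_right Rplus 0 l + a.
Proof. induction l; simpl; [lra| rewrite IHl; lra]. Qed.

Lemma sumR_ext lo hi g h : (forall i, (lo <= i <= hi)%nat -> g i = h i) ->
  sumR lo hi g = sumR lo hi h.
Proof.
  unfold sumR. intros H.
  assert (forall i, In i (seq lo (S hi - lo)) -> g i = h i).
  { intros i Hi. apply in_seq in Hi. apply H. lia. }
  clear H. induction (seq lo (S hi - lo)); simpl; auto.
  rewrite H0 by (left; auto). rewrite IHl; auto. intros; apply H0; right; auto.
Qed.

Lemma sumR_le lo hi g h : (forall i, (lo <= i <= hi)%nat -> g i <= h i) ->
  sumR lo hi g <= sumR lo hi h.
Proof.
  unfold sumR. intros H.
  assert (forall i, In i (seq lo (S hi - lo)) -> g i <= h i).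
  { intros i Hi. apply in_seq in Hi. apply H. lia. }
  clear H. induction (seq lo (S hi - lo)); simpl; [lra|].
  assert (g a <= h a) by (apply H0; left; auto).
  assert (fold_right Rplus 0 (map g l) <= fold_right Rplus 0 (map h l)) by
    (apply IHl; intros; apply H0; right; auto). lra.
Qed.

Lemma sumR_plus lo hi g h : sumR lo hi (fun i => g i + h i) = sumR lo hi g + sumR lo hi h.
Proof. unfold sumR. induction (seq lo (S hi - lo)); simpl; [lra| rewrite IHl; lra]. Qed.

Lemma sumR_scal lo hi c g : sumR lo hi (fun i => c * g i) = c * sumR lo hi g.
Proof. unfold sumR. induction (seq lo (S hi - lo)); simpl; [lra| rewrite IHl; lra]. Qed.

Lemma fr_const (l : list nat) c : fold_right Rplus 0 (map (fun _ => c) l) = INR (length l) * c.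
Proof. induction l; simpl length; [simpl; lra|]. rewrite S_INR. simpl. rewrite IHl. lra. Qed.

Lemma sumR_const lo hi c : sumR lo hi (fun _ => c) = INR (S hi - lo) * c.
Proof. unfold sumR. rewrite fr_const, length_seq. auto. Qed.

Lemma sumR_last lo hi g : (lo <= S hi)%nat -> sumR lo (S hi) g = sumR lo hi g + g (S hi).
Proof.
  intros H. unfold sumR. replace (S (S hi) - lo)%nat with (S (S hi - lo)) by lia.
  rewrite seq_S, map_app, fold_right_app.
  replace (lo + (S hi - lo))%nat with (S hi) by lia.
  simpl map. cbn [fold_right]. rewrite fr_acc. lra.
Qed.

Lemma sumR_nonneg lo hi g : (forall i, (lo <= i <= hi)%nat -> 0 <= g i) -> 0 <= sumR lo hi g.
Proof. intros H. replace 0 with (sumR lo hi (fun _ => 0)).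
  apply sumR_le; auto. rewrite sumR_const; lra. Qed.

Lemma deriv_eps g g' x : is_deriv_on01 g g' -> I01 x -> forall eps, 0 < eps ->
  exists d, 0 < d /\ forall y, I01 y -> y <> x -> Rabs (y - x) < d ->
    Rabs ((g y - g x) / (y - x) - g' x) < eps.
Proof.
  intros H Hx eps He.
  specialize (H x Hx (ball (g' x) eps) (locally_ball _ (mkposreal _ He))).
  destruct H as [d Hd]. exists d. split; [apply cond_pos|].
  intros y Hy Hyx Hyd. apply (Hd y). exact Hyd. split; auto.
Qed.

Lemma interior_deriv g g' x : is_deriv_on01 g g' -> 0 < x < 1 -> is_derive g x (g' x).
Proof.
  intros H Hx. apply is_derive_Reals. intros eps He.
  destruct (deriv_eps g g' x H ltac:(unfold I01; lra) eps He) as [d [Hd Hd']].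
  assert (Hm : 0 < Rmin d (Rmin x (1 - x))).
  { repeat apply Rmin_pos; lra. }
  exists (mkposreal _ Hm). intros h Hh Hhd. simpl in Hhd.
  assert (Rabs h < d /\ Rabs h < x /\ Rabs h < 1 - x).
  { pose proof (Rmin_l d (Rmin x (1-x))). pose proof (Rmin_r d (Rmin x (1-x))).
    pose proof (Rmin_l x (1-x)). pose proof (Rmin_r x (1-x)). lra. }
  specialize (Hd' (x + h)). replace (x + h - x) with h in Hd' by ring.
  apply Hd'.
  - unfold I01. destruct H0 as [_ [H1 H2]]. apply Rabs_def2 in H1. apply Rabs_def2 in H2. lra.
  - intro E. apply Hh. lra.
  - tauto.
Qed.

Lemma lip_int G g1 M : is_deriv_on01 G g1 -> (forall x, I01 x -> Rabs (g1 x) <= M) ->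
  forall a b, 0 < a <= b -> b < 1 -> Rabs (G b - G a) <= M * (b - a).
Proof.
  intros HD HB a b Hab Hb1.
  assert (Hmin : Rmin a b = a) by (apply Rmin_left; lra).
  assert (Hmax : Rmax a b = b) by (apply Rmax_right; lra).
  destruct (MVT_gen G a b g1) as [c [Hc Hc']].
  - rewrite Hmin, Hmax. intros x Hx. apply interior_deriv; auto; lra.
  - rewrite Hmin, Hmax. intros x Hx.
    apply derivable_continuous_pt. exists (g1 x). apply is_derive_Reals.
    apply interior_deriv; auto; lra.
  - rewrite Hmin, Hmax in Hc. rewrite Hc', Rabs_mult, (Rabs_right (b - a)) by lra.
    apply Rmult_le_compat_r; [lra|]. apply HB. unfold I01; lra.
Qed.

Lemma lip G g1 M : 0 <= M -> is_deriv_on01 G g1 -> (forall x, I01 x -> Rabs (g1 x) <= M) ->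
  forall a b, 0 < a <= b -> b <= 1 -> Rabs (G b - G a) <= (M + 1) * (b - a).
Proof.
  intros HM HD HB a b Hab Hb1.
  destruct (Rlt_or_le b 1) as [Hb|Hb].
  { pose proof (lip_int G g1 M HD HB a b Hab Hb). nra. }
  assert (b = 1) by lra. subst b.
  destruct (deriv_eps G g1 1 HD ltac:(unfold I01; lra) 1 ltac:(lra)) as [d [Hd Hd']].
  assert (loc : forall y, 0 <= y < 1 -> 1 - y < d -> Rabs (G 1 - G y) <= (M + 1) * (1 - y)).
  { intros y Hy Hyd. specialize (Hd' y ltac:(unfold I01; lra) ltac:(lra) ltac:(rewrite Rabs_left by lra; lra)).
    set (q := (G y - G 1) / (y - 1)) in Hd'.
    assert (E : G 1 - G y = q * (1 - y)) by (unfold q; field; lra).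
    rewrite E, Rabs_mult, (Rabs_right (1 - y)) by lra.
    apply Rmult_le_compat_r; [lra|].
    assert (Rabs (g1 1) <= M) by (apply HB; unfold I01; lra).
    pose proof (Rabs_triang_inv q (g1 1)). pose proof (Rabs_triang_inv (g1 1) q).
    rewrite Rabs_minus_sym in H1. lra. }
  destruct (Req_dec a 1) as [Ha|Ha].
  { subst a. replace (G 1 - G 1) with 0 by ring. rewrite Rabs_R0. lra. }
  destruct (Rlt_or_le (1 - a) d) as [Had|Had].
  { apply loc; lra. }
  set (z := 1 - d / 2).
  pose proof (lip_int G g1 M HD HB a z ltac:(unfold z; lra) ltac:(unfold z; lra)).
  pose proof (loc z ltac:(unfold z; lra) ltac:(unfold z; lra)).
  replace (G 1 - G a) with ((G 1 - G z) + (G z - G a)) by ring.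
  eapply Rle_trans; [apply Rabs_triang|]. unfold z in *. nra.
Qed.

Lemma floor_lt1 a : 0 < a < 1 -> floorN a = 0%nat.
Proof.
  intros H. unfold floorN, Int_part.
  rewrite <- (tech_up a 1) by (simpl; lra). reflexivity.
Qed.

Lemma floor_ge1 a : 1 <= a -> (1 <= floorN a)%nat.
Proof.
  intros H. unfold floorN, Int_part. destruct (archimed a) as [H1 _].
  assert (1 < up a)%Z by (apply lt_IZR; simpl; lra). lia.
Qed.

Lemma xg_facts n i j : (1 <= n)%nat -> (1 <= i <= j)%nat -> (j <= n)%nat -> (j <= i + 3)%nat ->
  0 < xg n i /\ xg n i <= xg n j /\ xg n j <= 1 /\ xg n j - xg n i <= 3 / INR n.
Proof.
  intros Hn Hij Hjn Hj3. unfold xg.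
  assert (Hn' : 1 <= INR n) by (apply (le_INR 1); auto).
  assert (1 <= INR i) by (apply (le_INR 1); lia).
  assert (INR i <= INR j) by (apply le_INR; lia).
  assert (INR j <= INR n) by (apply le_INR; lia).
  assert (INR j <= INR i + 3) by (replace 3 with (INR 3) by (simpl; ring); rewrite <- plus_INR; apply le_INR; lia).
  assert (0 < / INR n) by (apply Rinv_0_lt_compat; lra).
  unfold Rdiv. repeat split.
  - nra.
  - apply Rmult_le_compat_r; lra.
  - replace 1 with (INR n * / INR n) by (field; lra). apply Rmult_le_compat_r; lra.
  - nra.
Qed.

Lemma Rpower_inv_n n a : 0 < n -> Rpower (/ n) a = Rpower n (- a).
Proof. intros H. unfold Rpower. rewrite ln_Rinv by auto. f_equal; ring. Qed.

Lemma fdiff alpha M (Ha : 0 < alpha) (HM : 0 < M) n f :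
  (1 <= n)%nat -> Holder alpha M f -> forall i j, (1 <= i <= j)%nat -> (j <= n)%nat -> (j <= i + 3)%nat ->
  Rabs (f (xg n j) - f (xg n i)) <= 3 * (M + 1) * Rpower (INR n) (- Rmin alpha 1).
Proof.
  intros Hn [g [Hg0 [Hgd [Hgb Hgh]]]] i j Hij Hjn Hj3.
  destruct (xg_facts n i j Hn Hij Hjn Hj3) as [X1 [X2 [X3 X4]]].
  assert (Hn' : 1 <= INR n) by (apply (le_INR 1); auto).
  assert (I01 (xg n i)) by (unfold I01; lra).
  assert (I01 (xg n j)) by (unfold I01; lra).
  rewrite <- (Hg0 _ H), <- (Hg0 _ H0).
  destruct (Rlt_or_le alpha 1) as [Hlt|Hge].
  - rewrite Rmin_left by lra.
    pose proof (floor_lt1 alpha ltac:(lra)) as F. rewrite F in Hgh.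
    specialize (Hgh _ _ H0 H). simpl INR in Hgh. rewrite Rminus_0_r in Hgh.
    destruct (Req_dec (xg n j) (xg n i)) as [E|E].
    { rewrite E, Rminus_diag, Rabs_R0. unfold Rpower. 
      pose proof (exp_pos (- alpha * ln (INR n))). nra. }
    eapply Rle_trans; [exact Hgh|].
    rewrite Rabs_right by lra.
    assert (Rpower (xg n j - xg n i) alpha <= Rpower (3 / INR n) alpha)
      by (apply Rle_Rpower_l; lra).
    unfold Rdiv in H1. rewrite <- Rpower_mult_distr in H1 by (try apply Rinv_0_lt_compat; lra).
    rewrite Rpower_inv_n in H1 by lra.
    assert (Rpower 3 alpha <= Rpower 3 1) by (apply Rle_Rpower; lra).
    rewrite Rpower_1 in H2 by lra.
    assert (0 < Rpower (INR n) (- alpha)) by (unfold Rpower; apply exp_pos).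
    assert (0 <= Rpower 3 alpha) by (unfold Rpower; left; apply exp_pos).
    assert (Rpower 3 alpha * Rpower (INR n) (- alpha) <= 3 * Rpower (INR n) (- alpha)) by nra.
    assert (M * Rpower (xg n j - xg n i) alpha <= M * (3 * Rpower (INR n) (- alpha))).
    { apply Rmult_le_compat_l; lra. }
    nra.
  - rewrite Rmin_right by lra.
    pose proof (floor_ge1 alpha Hge).
    assert (HD : is_deriv_on01 (g 0%nat) (g 1%nat)) by (apply Hgd; lia).
    assert (HB : forall x, I01 x -> Rabs (g 1%nat x) <= M) by (intros; apply Hgb; auto).
    pose proof (lip (g 0%nat) (g 1%nat) M ltac:(lra) HD HB (xg n i) (xg n j) ltac:(lra) X3).
    rewrite Rpower_Ropp, Rpower_1 by lra. unfold Rdiv in X4. nra.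
Qed.

Lemma alg1 v0 v1 v2 v3 s1 s2 s3 s4 B : 0 <= s1 <= B -> 0 <= s2 <= B -> 0 <= s3 <= B -> 0 <= s4 <= B ->
  4 * (v1 - v0) ^ 2 <= 3 * (v2 + v1 - v0 - v3 + s1 - s2) ^ 2 + 3 * (v3 + v1 - v2 - v0 + s3 - s4) ^ 2 + 12 * B ^ 2.
Proof.
  intros. set (r := s1 - s2 + s3 - s4).
  assert (r ^ 2 <= 4 * B ^ 2) by (unfold r; nra).
  set (x := v2 + v1 - v0 - v3 + s1 - s2). set (y := v3 + v1 - v2 - v0 + s3 - s4).
  assert (E : 2 * (v1 - v0) = x + y - r) by (unfold x, y, r; ring).
  assert (4 * (v1 - v0) ^ 2 = (x + y - r) ^ 2) by (rewrite <- E; ring).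
  assert (3 * (x^2 + y^2 + r^2) - (x + y - r) ^ 2 = (x - y)^2 + (x + r)^2 + (y + r)^2) by ring.
  pose proof (pow2_ge_0 (x - y)); pose proof (pow2_ge_0 (x + r)); pose proof (pow2_ge_0 (y + r)).
  lra.
Qed.

Lemma alg2 x y z B : 0 <= z <= B -> (x - y - z) ^ 2 <= 3 * x ^ 2 + 3 * y ^ 2 + 3 * B ^ 2.
Proof. intros.
  assert (3 * (x^2 + y^2 + z^2) - (x - y - z) ^ 2 = (x + y)^2 + (x + z)^2 + (y - z)^2) by ring.
  pose proof (pow2_ge_0 (x + y)); pose proof (pow2_ge_0 (x + z)); pose proof (pow2_ge_0 (y - z)).
  assert (z ^ 2 <= B ^ 2) by nra. lra. Qed.

Lemma var_min n V c : (1 <= n)%nat ->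
  sumR 1 n (fun i => (V i - Vbar n V) ^ 2) <= sumR 1 n (fun i => (V i - c) ^ 2).
Proof.
  intros Hn. set (m := Vbar n V). set (Sm := sumR 1 n V).
  assert (HN : 0 < INR n) by (apply lt_0_INR; lia).
  assert (Hm : Sm = INR n * m) by (unfold m, Vbar, Sm; field; lra).
  assert (E : sumR 1 n (fun i => (V i - c) ^ 2) =
     sumR 1 n (fun i => (V i - m) ^ 2) + (2 * (m - c)) * Sm + INR n * (c ^ 2 - m ^ 2)).
  { rewrite (sumR_ext 1 n (fun i => (V i - c) ^ 2)
      (fun i => ((V i - m) ^ 2 + (2 * (m - c)) * V i) + (c ^ 2 - m ^ 2))) by (intros; ring).
    rewrite sumR_plus, sumR_plus, sumR_scal, sumR_const.
    replace (S n - 1)%nat with n by lia. reflexivity. }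
  rewrite E, Hm. assert (0 <= INR n * (m - c) ^ 2) by (apply Rmult_le_pos; [lra| apply pow2_ge_0]).
  assert (2 * (m - c) * (INR n * m) + INR n * (c ^ 2 - m ^ 2) = INR n * (m - c) ^ 2) by ring. lra.
Qed.

Lemma main_bound n V f M B : (4 <= n)%nat -> 0 <= M -> 0 <= B ->
  (forall i, (1 <= i <= n)%nat -> 0 <= V i <= M) ->
  (forall i j, (1 <= i <= j)%nat -> (j <= n)%nat -> (j <= i + 3)%nat ->
     (f (xg n j) - f (xg n i)) ^ 2 <= B) ->
  Vvar n V <= 3 * Tstat n V f + 2 * T1stat n V f + 2 * T2stat n V f + 9 * B ^ 2 + 7 * M ^ 2 / INR n.
Proof.
  intros Hn HM HB HV Hsq.
  assert (HN : 0 < INR n) by (apply lt_0_INR; lia).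
  assert (HNle : forall k, (k <= n)%nat -> INR k <= INR n) by (intros; apply le_INR; auto).
  set (D := fun i => V (S i) - V i).
  assert (HD : forall i, (1 <= i)%nat -> (S i <= n)%nat -> D i ^ 2 <= M ^ 2).
  { intros i H1 H2. unfold D. pose proof (HV i ltac:(lia)). pose proof (HV (S i) ltac:(lia)). nra. }
  assert (Hsq0 : forall i j, (1 <= i <= j)%nat -> (j <= n)%nat -> (j <= i + 3)%nat ->
     0 <= (f (xg n j) - f (xg n i)) ^ 2 <= B).
  { intros; split; [apply pow2_ge_0| apply Hsq; auto]. }
  set (SA := sumR 1 (n - 3) (fun i => D i ^ 2)).
  assert (HA : 4 * SA <= 3 * (INR n * T1stat n V f) + 3 * (INR n * T2stat n V f) + INR n * (12 * B ^ 2)).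
  { assert (E1 : INR n * T1stat n V f = sumR 1 (n - 3) (fun i =>
      (W V (S i) + (dl n f (S i)) ^ 2 - V i - V (i + 3)%nat
       - (f (xg n (i + 3)%nat) - f (xg n i)) ^ 2) ^ 2)) by (unfold T1stat; field; lra).
    assert (E2 : INR n * T2stat n V f = sumR 1 (n - 3) (fun i =>
      (Wt V (S i) + (dlt n f (S i)) ^ 2 - Wt V i - (dlt n f i) ^ 2) ^ 2)) by (unfold T2stat; field; lra).
    rewrite E1, E2. unfold SA.
    eapply Rle_trans with (INR (S (n - 3) - 1) * (12 * B ^ 2) + (3 * sumR 1 (n - 3) (fun i =>
      (W V (S i) + (dl n f (S i)) ^ 2 - V i - V (i + 3)%nat
       - (f (xg n (i + 3)%nat) - f (xg n i)) ^ 2) ^ 2) + 3 * sumR 1 (n - 3) (fun i =>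
      (Wt V (S i) + (dlt n f (S i)) ^ 2 - Wt V i - (dlt n f i) ^ 2) ^ 2))).
    2: { assert (INR (S (n - 3) - 1) <= INR n) by (apply HNle; lia).
         assert (0 <= 12 * B ^ 2) by nra. nra. }
    rewrite <- sumR_const, <- !sumR_scal, <- !sumR_plus.
    apply sumR_le. intros i Hi.
    replace (i + 3)%nat with (S (S (S i))) by lia.
    unfold W, dl, Wt, dlt, D.
    pose proof (Hsq0 (S i) (S (S (S i))) ltac:(lia) ltac:(lia) ltac:(lia)).
    pose proof (Hsq0 (S i) (S (S i)) ltac:(lia) ltac:(lia) ltac:(lia)).
    pose proof (Hsq0 i (S (S i)) ltac:(lia) ltac:(lia) ltac:(lia)).
    pose proof (Hsq0 i (S (S (S i))) ltac:(lia) ltac:(lia) ltac:(lia)).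
    pose proof (alg1 (V i) (V (S i)) (V (S (S i))) (V (S (S (S i))))
       ((f (xg n (S (S i))) - f (xg n (S i))) ^ 2)
       ((f (xg n (S (S (S i)))) - f (xg n i)) ^ 2)
       ((f (xg n (S (S (S i)))) - f (xg n (S i))) ^ 2)
       ((f (xg n (S (S i))) - f (xg n i)) ^ 2) B H0 H2 H H1).
    lra. }
  set (SD1 := sumR 1 (n - 1) (fun i => D i ^ 2)).
  assert (HSD1 : SD1 <= SA + 2 * M ^ 2).
  { unfold SD1, SA. replace (n - 1)%nat with (S (n - 2)) by lia.
    rewrite sumR_last by lia. replace (n - 2)%nat with (S (n - 3)) by lia.
    rewrite sumR_last by lia.
    pose proof (HD (S (n - 3)) ltac:(lia) ltac:(lia)).
    pose proof (HD (S (S (n - 3))) ltac:(lia) ltac:(lia)). lra. }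
  set (c := Wbar n V + d2bar n f).
  set (Q := fun i => (2 * V i - c) ^ 2).
  assert (HQ1 : sumR 1 (n - 1) Q <= 3 * (INR n * Tstat n V f) + 3 * SD1 + INR n * (3 * B ^ 2)).
  { assert (E : INR n * Tstat n V f = sumR 1 (n - 1)
      (fun i => (W V i + (dl n f i) ^ 2 - Wbar n V - d2bar n f) ^ 2)) by (unfold Tstat; field; lra).
    rewrite E. unfold SD1.
    eapply Rle_trans with (INR (S (n - 1) - 1) * (3 * B ^ 2) + (3 * sumR 1 (n - 1)
      (fun i => (W V i + (dl n f i) ^ 2 - Wbar n V - d2bar n f) ^ 2) + 3 * sumR 1 (n - 1) (fun i => D i ^ 2))).
    2: { assert (INR (S (n - 1) - 1) <= INR n) by (apply HNle; lia).
         assert (0 <= 3 * B ^ 2) by nra. nra. }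
    rewrite <- sumR_const, <- !sumR_scal, <- !sumR_plus.
    apply sumR_le. intros i Hi. unfold Q.
    pose proof (Hsq0 i (S i) ltac:(lia) ltac:(lia) ltac:(lia)).
    pose proof (alg2 (W V i + (dl n f i) ^ 2 - Wbar n V - d2bar n f) (D i) ((dl n f i) ^ 2) B H).
    replace (2 * V i - c) with ((W V i + (dl n f i) ^ 2 - Wbar n V - d2bar n f) - D i - (dl n f i) ^ 2)
      by (unfold c, W, D; ring).
    lra. }
  assert (HQn : Q n <= 2 * Q (n - 1)%nat + 8 * M ^ 2).
  { unfold Q. pose proof (HD (n - 1)%nat ltac:(lia) ltac:(lia)). unfold D in H.
    replace (S (n - 1)) with n in H by lia.
    pose proof (pow2_ge_0 (2 * V (n - 1)%nat - c + 2 * (V n - V (n - 1)%nat))).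
    pose proof (pow2_ge_0 (2 * V (n - 1)%nat - c - 2 * (V n - V (n - 1)%nat))).
    replace (2 * V n - c) with ((2 * V (n - 1)%nat - c) + 2 * (V n - V (n - 1)%nat)) by ring.
    nra. }
  assert (HQall : sumR 1 n Q <= 3 * sumR 1 (n - 1) Q + 8 * M ^ 2).
  { replace n with (S (n - 1)) at 1 by lia. rewrite sumR_last by lia.
    replace (S (n - 1)) with n by lia.
    assert (Q (n - 1)%nat <= sumR 1 (n - 1) Q).
    { replace (n - 1)%nat with (S (n - 2)) by lia. rewrite sumR_last by lia.
      assert (0 <= sumR 1 (n - 2) Q) by (apply sumR_nonneg; intros; unfold Q; apply pow2_ge_0). lra. }
    lra. }
  assert (HSV : sumR 1 n (fun i => (V i - Vbar n V) ^ 2) <= / 4 * sumR 1 n Q).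
  { eapply Rle_trans. apply (var_min n V (c / 2)). lia.
    rewrite <- sumR_scal. right. apply sumR_ext. intros. unfold Q. field. }
  assert (HT : 0 <= Tstat n V f).
  { unfold Tstat. apply Rmult_le_pos. left; apply Rinv_0_lt_compat; auto.
    apply sumR_nonneg. intros; apply pow2_ge_0. }
  assert (HT1 : 0 <= T1stat n V f).
  { unfold T1stat. apply Rmult_le_pos. left; apply Rinv_0_lt_compat; auto.
    apply sumR_nonneg. intros; apply pow2_ge_0. }
  assert (HT2 : 0 <= T2stat n V f).
  { unfold T2stat. apply Rmult_le_pos. left; apply Rinv_0_lt_compat; auto.
    apply sumR_nonneg. intros; apply pow2_ge_0. }
  assert (Hfin : INR n * Vvar n V <= INR n * (3 * Tstat n V f + 2 * T1stat n V f + 2 * T2stat n V f + 9 * B ^ 2 + 7 * M ^ 2 / INR n)).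
  { replace (INR n * Vvar n V) with (sumR 1 n (fun i => (V i - Vbar n V) ^ 2)) by (unfold Vvar; field; lra).
    replace (INR n * (3 * Tstat n V f + 2 * T1stat n V f + 2 * T2stat n V f + 9 * B ^ 2 + 7 * M ^ 2 / INR n))
      with (3 * (INR n * Tstat n V f) + 2 * (INR n * T1stat n V f) + 2 * (INR n * T2stat n V f) + INR n * (9 * B ^ 2) + 7 * M ^ 2) by (field; lra).
    assert (0 <= INR n * Tstat n V f) by nra.
    assert (0 <= INR n * T1stat n V f) by nra.
    assert (0 <= INR n * T2stat n V f) by nra.
    assert (0 <= INR n * B ^ 2) by nra.
    assert (INR n * (12 * B ^ 2) = 12 * (INR n * B ^ 2)) by ring.
    assert (INR n * (9 * B ^ 2) = 9 * (INR n * B ^ 2)) by ring.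
    assert (INR n * (3 * B ^ 2) = 3 * (INR n * B ^ 2)) by ring.
    assert (0 <= M ^ 2) by apply pow2_ge_0.
    lra. }
  apply Rmult_le_reg_l with (INR n); auto.
Qed.

Lemma Vvar_le n V M : (1 <= n)%nat -> (forall i, (1 <= i <= n)%nat -> 0 <= V i <= M) -> Vvar n V <= M ^ 2.
Proof.
  intros Hn HV. assert (HN : 0 < INR n) by (apply lt_0_INR; lia).
  pose proof (var_min n V 0 Hn).
  assert (sumR 1 n (fun i => (V i - 0) ^ 2) <= sumR 1 n (fun _ => M ^ 2)).
  { apply sumR_le. intros i Hi. pose proof (HV i Hi). nra. }
  rewrite sumR_const in H0. replace (S n - 1)%nat with n in H0 by lia.
  unfold Vvar. apply Rmult_le_reg_l with (INR n); auto.
  replace (INR n * (/ INR n * sumR 1 n (fun i => (V i - Vbar n V) ^ 2))) with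
    (sumR 1 n (fun i => (V i - Vbar n V) ^ 2)) by (field; lra). lra.
Qed.

Theorem proposition4p2 (alpha M : R) (Halpha : 0 < alpha) (HM : 0 < M) :
  exists C : R, 0 < C /\
    forall (n : nat) (V : nat -> R) (f : R -> R),
      (1 <= n)%nat ->
      (forall i, (1 <= i <= n)%nat -> 0 <= V i <= M) ->
      Holder alpha M f ->
      Vvar n V <=
        C * (/ INR n + Rpower (INR n) (- (4 * Rmin alpha 1))
             + Tstat n V f + T1stat n V f + T2stat n V f).
Proof.
  exists (10 + 729 * (M + 1) ^ 4 + 7 * M ^ 2).
  assert (HM4 : 0 <= (M + 1) ^ 4) by (apply pow_le; lra).
  split. { nra. }
  intros n V f Hn HV Hf.
  assert (HN : 0 < INR n) by (apply lt_0_INR; lia).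
  assert (HN1 : 1 <= INR n) by (apply (le_INR 1); lia).
  set (a := Rmin alpha 1).
  set (e := Rpower (INR n) (- a)).
  assert (He : 0 < e) by (unfold e, Rpower; apply exp_pos).
  set (B := 9 * (M + 1) ^ 2 * e ^ 2).
  assert (HB : 0 <= B) by (unfold B; pose proof (pow2_ge_0 (M + 1)); pose proof (pow2_ge_0 e); nra).
  assert (Hsq : forall i j, (1 <= i <= j)%nat -> (j <= n)%nat -> (j <= i + 3)%nat ->
     (f (xg n j) - f (xg n i)) ^ 2 <= B).
  { intros i j H1 H2 H3. pose proof (fdiff alpha M Halpha HM n f Hn Hf i j H1 H2 H3) as Hd.
    fold a e in Hd. rewrite <- pow2_abs.
    pose proof (Rabs_pos (f (xg n j) - f (xg n i))).
    unfold B. replace (9 * (M + 1) ^ 2 * e ^ 2) with ((3 * (M + 1) * e) ^ 2) by ring.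
    apply pow_incr. lra. }
  set (P4 := Rpower (INR n) (- (4 * a))).
  assert (HP4 : 0 < P4) by (unfold P4, Rpower; apply exp_pos).
  assert (HB2 : B ^ 2 = 81 * (M + 1) ^ 4 * P4).
  { unfold B, P4, e. replace (- (4 * a)) with (- a + (- a + (- a + - a))) by ring.
    rewrite !Rpower_plus. ring. }
  assert (HT : 0 <= Tstat n V f).
  { unfold Tstat. apply Rmult_le_pos. left; apply Rinv_0_lt_compat; auto.
    apply sumR_nonneg. intros; apply pow2_ge_0. }
  assert (HT1 : 0 <= T1stat n V f).
  { unfold T1stat. apply Rmult_le_pos. left; apply Rinv_0_lt_compat; auto.
    apply sumR_nonneg. intros; apply pow2_ge_0. }
  assert (HT2 : 0 <= T2stat n V f).
  { unfold T2stat. apply Rmult_le_pos. left; apply Rinv_0_lt_compat; auto.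
    apply sumR_nonneg. intros; apply pow2_ge_0. }
  set (C := 10 + 729 * (M + 1) ^ 4 + 7 * M ^ 2).
  assert (HC1 : 3 * M ^ 2 <= C) by (unfold C; nra).
  assert (HC2 : 729 * (M + 1) ^ 4 <= C) by (unfold C; nra).
  assert (HC3 : 3 <= C) by (unfold C; nra).
  assert (HC4 : 7 * M ^ 2 <= C) by (unfold C; nra).
  assert (Hinv : 0 < / INR n) by (apply Rinv_0_lt_compat; auto).
  assert (E1 : 3 * Tstat n V f <= C * Tstat n V f) by (apply Rmult_le_compat_r; lra).
  assert (E2 : 2 * T1stat n V f <= C * T1stat n V f) by (apply Rmult_le_compat_r; lra).
  assert (E3 : 2 * T2stat n V f <= C * T2stat n V f) by (apply Rmult_le_compat_r; lra).
  assert (E4 : 729 * (M + 1) ^ 4 * P4 <= C * P4) by (apply Rmult_le_compat_r; lra).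
  assert (E5 : 7 * M ^ 2 * / INR n <= C * / INR n) by (apply Rmult_le_compat_r; lra).
  assert (E6 : 0 <= C * P4) by nra.
  assert (E7 : 0 <= C * Tstat n V f) by nra.
  assert (E8 : 0 <= C * T1stat n V f) by nra.
  assert (E9 : 0 <= C * T2stat n V f) by nra.
  fold a P4.
  replace (C * (/ INR n + P4 + Tstat n V f + T1stat n V f + T2stat n V f)) with
    (C * / INR n + C * P4 + C * Tstat n V f + C * T1stat n V f + C * T2stat n V f) by ring.
  destruct (Compare_dec.le_lt_dec 4 n) as [H4|H4].
  - pose proof (main_bound n V f M B H4 ltac:(lra) HB HV Hsq) as Hm.
    rewrite HB2 in Hm. unfold Rdiv in Hm. lra.
  - pose proof (Vvar_le n V M Hn HV).
    assert (INR n <= 3) by (replace 3 with (INR 3) by (simpl; ring); apply le_INR; lia).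
    assert (M ^ 2 <= 3 * M ^ 2 * / INR n).
    { apply Rmult_le_reg_l with (INR n); auto.
      replace (INR n * (3 * M ^ 2 * / INR n)) with (3 * M ^ 2) by (field; lra).
      pose proof (pow2_ge_0 M). nra. }
    assert (3 * M ^ 2 * / INR n <= C * / INR n) by (apply Rmult_le_compat_r; lra).
    lra.
Qed.
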